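(* Let $\mathbf{P}$ be a poset and let $\phi\in\mathcal{FO}(\forall,\exists,\wedge)$ be a sentence in reduced form. If there exists $p\in P$ such that $m\le^{\mathbf{P}}p\le^{\mathbf{P}}M$ for every minimal element $m$ of $\mathbf{P}$ and every maximal element $M$ of $\mathbf{P}$, then $\mathbf{P}\models\phi$.
   Context: $\mathcal{FO}(\forall,\exists,\wedge)$ denotes the class of first-order sentences over the vocabulary $\{\le\}$ built from atoms using only $\forall,\exists,\wedge$. All posets are finite with at least two elements. A sentence in alternating prefix form is $\phi=\forall x_1\exists y_1\ldots\forall x_l\exists y_l\,C$ with $l\ge0$, distinct variables, and $C$ a conjunction of atoms $u\le v$ over $\{x_1,y_1,\ldots,x_l,y_l\}$. It is represented by the prefix chain $\mathbf{Q}_\phi$ on $\{x_1,y_1,\ldots,x_l,y_l\}$ ordered $x_1<y_1<\cdots<x_l<y_l$ and the digraph $\mathbf{M}_\phi$ on the same set with an edge $(u,v)$ iff $u\le v$ is an atom of $C$. Let $M^\forall_\phi=\{x_1,\ldots,x_l\}$ and $M^\exists_\phi=\{y_1,\ldots,y_l\}$. $\phi$ is in reduced form if: (i) $\mathbf{M}_\phi$ is a poset; (ii) the elements of $M^\forall_\phi$ are pairwise incomparable in $\mathbf{M}_\phi$; (iii) for distinct $x,x'\in M^\forall_\phi$, their upsets in $\mathbf{M}_\phi$ are disjoint and their downsets in $\mathbf{M}_\phi$ are disjoint; (iv) for every $x\in M^\forall_\phi$ and every $y\in M^\exists_\phi$ comparable to $x$ in $\mathbf{M}_\phi$, $x$ precedes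 $y$ in $\mathbf{Q}_\phi$. *)

(* Defs.v *)
From HB Require Import structures.
From mathcomp Require Import all_boot all_order.
Set Implicit Arguments. Unset Strict Implicit. Unset Printing Implicit Defensive.
Import Order.Theory.
Local Open Scope order_scope.

(* A sentence in alternating prefix form
     forall x_1 exists y_1 ... forall x_l exists y_l C.
   Variables are encoded by natural numbers: x_i (i = 0..l-1) is 2*i and
   y_i is 2*i+1, so the prefix chain Q_phi is the usual order < on
   {0,..,2l-1}.  C is the list of atoms (u,v) meaning u <= v. *)
Record sentence := Sentence { nquant : nat ; atoms : seq (nat * nat) }.

Definition xvar (i : nat) : nat := i.*2.
Definition yvar (i : nat) : nat := i.*2.+1.
Definition is_var (phi : sentence) (u : nat) : bool := (u < (nquant phi).*2)%N.

Definition wf_sentence (phi : sentence) : Prop :=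
  forall u v, (u, v) \in atoms phi -> is_var phi u /\ is_var phi v.

Definition medge (phi : sentence) (u v : nat) : bool := (u, v) \in atoms phi.

Definition reduced_form (phi : sentence) : Prop :=
  let l := nquant phi in
  let E := medge phi in
  (* (i) M_phi is a poset on its vertex set *)
  ((forall u, is_var phi u -> E u u) /\
      (forall u v, E u v -> E v u -> u = v) /\
      (forall u v w, E u v -> E v w -> E u w)) /\
  (* (ii) universal variables pairwise incomparable *)
      (forall i j, (i < l)%N -> (j < l)%N -> i <> j ->
         ~~ E (xvar i) (xvar j)) /\
  (* (iii) disjoint upsets and disjoint downsets *)
      (forall i j, (i < l)%N -> (j < l)%N -> i <> j ->
         (forall v, ~ (E (xvar i) v /\ E (xvar j) v)) /\
         (forall u, ~ (E u (xvar i) /\ E u (xvar j)))) /\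
  (* (iv) comparable x_i, y_j : x_i precedes y_j in Q_phi *)
      (forall i j, (i < l)%N -> (j < l)%N ->
         (E (xvar i) (yvar j) || E (yvar j) (xvar i)) -> (xvar i < yvar j)%N).

Section Semantics.
Context {d : Order.disp_t} (T : finPOrderType d).

Definition upd (a : nat -> T) (j : nat) (t : T) : nat -> T :=
  fun i => if i == j then t else a i.

(* sat_from n k C a : the assignment a (already fixing x_0,y_0,...,x_(k-1),y_(k-1))
   satisfies  forall x_k exists y_k ... forall x_(k+n-1) exists y_(k+n-1) C. *)
Fixpoint sat_from (n k : nat) (C : seq (nat * nat)) (a : nat -> T) : Prop :=
  match n with
  | 0 => forall u v, (u, v) \in C -> a u <= a v
  | n'.+1 => forall x : T, exists y : T,
      sat_from n' k.+1 C (upd (upd a (xvar k) x) (yvar k) y)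
  end.

(* P |= phi.  The initial assignment is irrelevant for well-formed
   sentences (every variable is bound before the matrix is evaluated). *)
Definition models (phi : sentence) : Prop :=
  forall a0 : nat -> T, sat_from (nquant phi) 0 (atoms phi) a0.

Definition minimal (m : T) : Prop := forall x : T, x <= m -> x = m.
Definition maximal (M : T) : Prop := forall x : T, M <= x -> x = M.
End Semantics.

(* Main.v *)
Require Import Defs.
From HB Require Import structures.
From mathcomp Require Import all_boot all_order zify.
From Stdlib Require Import ClassicalEpsilon.
Import Order.Theory.
Local Open Scope order_scope.

Section Ex.
Context {d : Order.disp_t} (T : finPOrderType d).

Lemma exists_max (x : T) : exists M : T, x <= M /\ maximal M.
Proof.
move: {2}#|[set z | x < z]| (leqnn #|[set z | x < z]|) => n.
elim: n x => [|n IH] x Hc.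
  exists x; split => // z xz.
  have [->//|ne] := eqVneq z x.
  by move: Hc; rewrite leqn0 => /eqP/cards0_eq/setP/(_ z); rewrite !inE lt_def ne xz.
case: (pickP [pred z | x < z]) => [z /= xz|nz].
  have [M [zM mM]] : exists M, z <= M /\ maximal M; last first.
    by exists M; split => //; exact: le_trans (ltW xz) zM.
  apply: IH; rewrite -ltnS; apply: leq_trans Hc; apply: proper_card; apply/properP; split.
    by apply/subsetP => w; rewrite !inE => /(lt_trans xz).
  by exists z; rewrite !inE ?ltxx.
exists x; split => // z xz.
have [->//|ne] := eqVneq z x.
by move: (nz z) => /=; rewrite lt_def ne xz.
Qed.
Lemma exists_min (x : T) : exists M : T, M <= x /\ minimal M.
Proof.
move: {2}#|[set z | z < x]| (leqnn #|[set z | z < x]|) => n.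
elim: n x => [|n IH] x Hc.
  exists x; split => // z xz.
  have [->//|ne] := eqVneq z x.
  by move: Hc; rewrite leqn0 => /eqP/cards0_eq/setP/(_ z); rewrite !inE lt_def eq_sym ne xz.
case: (pickP [pred z | z < x]) => [z /= xz|nz].
  have [M [zM mM]] : exists M, M <= z /\ minimal M; last first.
    by exists M; split => //; exact: le_trans zM (ltW xz).
  apply: IH; rewrite -ltnS; apply: leq_trans Hc; apply: proper_card; apply/properP; split.
    by apply/subsetP => w; rewrite !inE => /(fun h => lt_trans h xz).
  by exists z; rewrite !inE ?ltxx.
exists x; split => // z xz.
have [->//|ne] := eqVneq z x.
by move: (nz z) => /=; rewrite lt_def eq_sym ne xz.
Qed.
End Ex.

Section Main.
Set Implicit Arguments. Unset Strict Implicit.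
Context {d : Order.disp_t} (T : finPOrderType d) (phi : sentence).
Context (wf : wf_sentence phi) (rf : reduced_form phi).
Context (p : T) (Hp : forall m M : T, minimal m -> maximal M -> m <= p /\ p <= M).

Local Notation l := (nquant phi).
Local Notation E := (medge phi).

Definition Mx (x : T) : T :=
  proj1_sig (constructive_indefinite_description _ (exists_max T x)).
Definition mn (x : T) : T :=
  proj1_sig (constructive_indefinite_description _ (exists_min T x)).

Lemma Mx_spec x : x <= Mx x /\ maximal (Mx x).
Proof. exact: (proj2_sig (constructive_indefinite_description _ (exists_max T x))). Qed.
Lemma mn_spec x : mn x <= x /\ minimal (mn x).
Proof. exact: (proj2_sig (constructive_indefinite_description _ (exists_min T x))). Qed.

Lemma mn_p x : mn x <= p.
Proof. have [_ m] := mn_spec x; have [_ M] := Mx_spec p. by have [] := Hp m M. Qed.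
Lemma p_Mx x : p <= Mx x.
Proof. have [_ m] := mn_spec p; have [_ M] := Mx_spec x. by have [] := Hp m M. Qed.


Lemma var_l u : is_var phi u -> (u < l.*2)%N. Proof. by []. Qed.

Lemma xl i v : E (xvar i) v -> (i < l)%N.
Proof. by case/wf => /var_l; rewrite /xvar -!muln2 => ? _; lia. Qed.
Lemma xl' i v : E v (xvar i) -> (i < l)%N.
Proof. by case/wf => _ /var_l; rewrite /xvar -!muln2 => ?; lia. Qed.
Lemma yl i v : E (yvar i) v -> (i < l)%N.
Proof. by case/wf => /var_l; rewrite /yvar -!muln2 => ? _; lia. Qed.
Lemma yl' i v : E v (yvar i) -> (i < l)%N.
Proof. by case/wf => _ /var_l; rewrite /yvar -!muln2 => ?; lia. Qed.

Lemma xy_ne i j : xvar i <> yvar j.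
Proof. rewrite /xvar /yvar -!muln2; lia. Qed.

Lemma Fxx i i' : E (xvar i) (xvar i') -> i = i'.
Proof.
move=> h; have [_ [Hii _]] := rf.
case: (eqVneq i i') => // /eqP ne; have := Hii i i' (xl h) (xl' h) ne; by rewrite h.
Qed.

Lemma F1 i i' j : E (xvar i) (yvar j) -> E (xvar i') (yvar j) -> i = i'.
Proof.
move=> h1 h2; have [_ [_ [Hiii _]]] := rf.
case: (eqVneq i i') => // /eqP ne.
have [H _] := Hiii i i' (xl h1) (xl h2) ne; by exfalso; apply: (H (yvar j)); split.
Qed.

Lemma F2 i i' j : E (yvar j) (xvar i) -> E (yvar j) (xvar i') -> i = i'.
Proof.
move=> h1 h2; have [_ [_ [Hiii _]]] := rf.
case: (eqVneq i i') => // /eqP ne.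
have [_ H] := Hiii i i' (xl' h1) (xl' h2) ne; by exfalso; apply: (H (yvar j)); split.
Qed.

Lemma Etr u v w : E u v -> E v w -> E u w.
Proof. have [[_ [_ Et]] _] := rf; exact: Et. Qed.

Lemma F3 i i' j : E (xvar i) (yvar j) -> E (yvar j) (xvar i') -> False.
Proof.
move=> h1 h2; have := Fxx (Etr h1 h2) => ei; subst i'.
have [[_ [Ea _]] _] := rf; exact: (xy_ne (Ea _ _ h1 h2)).
Qed.

Lemma xy_le i j : E (xvar i) (yvar j) || E (yvar j) (xvar i) -> (i <= j)%N.
Proof.
move=> h; have [_ [_ [_ Hiv]]] := rf.
have [il jl] : (i < l)%N /\ (j < l)%N.
  by case/orP: h => h; [split; [exact: xl h|exact: yl' h] | split; [exact: xl' h|exact: yl h]].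
have := Hiv i j il jl h; rewrite /xvar /yvar -!muln2; lia.
Qed.

Definition val (a : nat -> T) (j : nat) : T :=
  match [pick i : 'I_l | E (xvar i) (yvar j)] with
  | Some i => Mx (a (xvar i))
  | None => match [pick i : 'I_l | E (yvar j) (xvar i)] with
            | Some i => mn (a (xvar i))
            | None => p end end.

Lemma val_ext a b j : (forall i, (i <= j)%N -> a (xvar i) = b (xvar i)) -> val a j = val b j.
Proof.
move=> h; rewrite /val.
case: pickP => [i hi|_]; first by rewrite h // xy_le // hi.
case: pickP => [i hi|_] //; by rewrite h // xy_le // hi orbT.
Qed.

Lemma val_cases a j :
  (exists i, E (xvar i) (yvar j) /\ val a j = Mx (a (xvar i))) \/
  (exists i, E (yvar j) (xvar i) /\ val a j = mn (a (xvar i))) \/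
  ((forall i, ~~ E (xvar i) (yvar j) /\ ~~ E (yvar j) (xvar i)) /\ val a j = p).
Proof.
rewrite /val.
case: pickP => [i hi|h1]; first by left; exists i.
case: pickP => [i hi|h2]; first by right; left; exists i.
right; right; split => // i.
case: (boolP (E (xvar i) (yvar j))) => [e|n1]; first by have := h1 (Ordinal (xl e)); rewrite /= e.
case: (boolP (E (yvar j) (xvar i))) => [e|n2]; last by [].
by have := h2 (Ordinal (xl' e)); rewrite /= e.
Qed.


Lemma var_dec u : is_var phi u -> (exists i, u = xvar i) \/ (exists2 j, (j < l)%N & u = yvar j).
Proof.
move=> /var_l hu; rewrite -(odd_double_half u) in hu *.
case: (odd u) hu => /= hu; last by left; exists u./2.
right; exists u./2 => //; move: hu; rewrite -!muln2; lia.
Qed.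

Lemma upd_ne (a : nat -> T) w t u : u <> w -> upd a w t u = a u.
Proof. by rewrite /upd; case: eqP. Qed.
Lemma upd_eq (a : nat -> T) w t : upd a w t w = t.
Proof. by rewrite /upd eqxx. Qed.

Lemma base a : (forall j, (j < l)%N -> a (yvar j) = val a j) ->
  forall u v, (u, v) \in atoms phi -> a u <= a v.
Proof.
move=> Ha u v huv; have e : E u v := huv; have [hu hv] := wf huv.
move: e; case: (var_dec hu) => [[i ->]|[j jl ->]]; case: (var_dec hv) => [[i' ->]|[j' jl' ->]] e.
- by have := Fxx e => ->.
- rewrite Ha //; case: (val_cases a j') => [[i0 [e' ->]]|[[i0 [e' _]]|[H _]]].
  + rewrite (F1 e e'); exact: (Mx_spec _).1.
  + by case: (F3 e e').
  + by have [] := H i; rewrite e.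
- rewrite Ha //; case: (val_cases a j) => [[i0 [e' _]]|[[i0 [e' ->]]|[H _]]].
  + by case: (F3 e' e).
  + rewrite (F2 e' e); exact: (mn_spec _).1.
  + by have [_ n] := H i'; rewrite e in n.
- rewrite !Ha //.
  case: (val_cases a j) => [[i1 [e1 ->]]|[[i1 [e1 ->]]|[H1 ->]]];
  case: (val_cases a j') => [[i2 [e2 ->]]|[[i2 [e2 ->]]|[H2 ->]]].
  + by rewrite (F1 (Etr e1 e) e2).
  + by case: (F3 (Etr e1 e) e2).
  + by have [n _] := H2 i1; rewrite (Etr e1 e) in n.
  + exact: le_trans (mn_p _) (p_Mx _).
  + by rewrite (F2 e1 (Etr e e2)).
  + exact: mn_p.
  + exact: p_Mx.
  + by have [_ n] := H1 i2; rewrite (Etr e e2) in n.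
  + by [].
Qed.

Lemma step n : forall k a, (n + k = l)%N ->
  (forall j, (j < k)%N -> a (yvar j) = val a j) -> sat_from n k (atoms phi) a.
Proof.
elim: n => [|n IH] k a hk Ha /=.
  by apply: base => j jl; apply: Ha; move: jl; rewrite -hk.
move=> x; set a1 := upd a (xvar k) x; exists (val a1 k).
apply: IH; first by rewrite addnS.
move=> j jk; set a2 := upd a1 (yvar k) (val a1 k).
have -> : val a2 j = val a1 j.
  by apply: val_ext => i _; rewrite /a2 upd_ne //; exact: xy_ne.
have [->|ne] := eqVneq j k; first by rewrite /a2 upd_eq.
have jk' : (j < k)%N by move: jk ne; rewrite ltnS leq_eqVlt => /orP[/eqP->|]; rewrite ?eqxx.
rewrite /a2 upd_ne; last by rewrite /yvar -!muln2; move: ne => /eqP; lia.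
rewrite /a1 upd_ne; last by move=> h; apply: (xy_ne (esym h)).
rewrite Ha //; apply: val_ext => i ij; rewrite upd_ne //.
rewrite /xvar -!muln2; lia.
Qed.

End Main.

Theorem proposition2 (d : Order.disp_t) (T : finPOrderType d)
  (phi : sentence) :
  (1 < #|T|)%N ->
  wf_sentence phi ->
  reduced_form phi ->
  (exists p : T, forall m M : T, minimal m -> maximal M -> m <= p /\ p <= M) ->
  models T phi.
Proof.
move=> _ wf rf [p Hp] a0.
by apply: (step wf rf Hp); rewrite ?addn0.
Qed.
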